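(* Let $\bm{S}\in\mathbb{R}^{m\times n}$ be $\alpha$-sparse and let $r$ be a positive integer. \begin{enumerate} \item (With replacement.) Let $\bm{R}\in\mathbb{R}^{|I|\times n}$ be the submatrix of $\bm{S}$ formed by $|I|$ rows sampled uniformly with replacement, where $|I|=cr\log(n)$ with $c\geq\frac{16}{3\alpha r}$. Then $\bm{R}$ is $2\alpha$-sparse with probability at least $1-n^{-1}$. Similarly, the submatrix $\bm{C}\in\mathbb{R}^{m\times|J|}$ formed by $|J|=cr\log(m)$ columns of $\bm{S}$ sampled uniformly with replacement is $2\alpha$-sparse with probability at least $1-m^{-1}$. \item (Without replacement.) Let $\bm{R}\in\mathbb{R}^{|I|\times n}$ be the submatrix of $\bm{S}$ formed by $|I|$ rows sampled uniformly without replacement, where $|I|=cr\log(n)$ with $c\geq\frac{8}{\alpha r}$. Then $\bm{R}$ is $2\alpha$-sparse with probability at least $1-2n^{-1}$. Similarly, the submatrix $\bm{C}\in\mathbb{R}^{m\times|J|}$ formed by $|J|=cr\log(m)$ columns of $\bm{S}$ sampled uniformly without replacement is $2\alpha$-sparse with probability at least $1-2m^{-1}$. \end{enumerate}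
   Context: A matrix $\bm{A}\in\mathbb{R}^{p\times q}$ is $\alpha$-sparse if every row of $\bm{A}$ has at most $\alpha q$ nonzero entries and every column has at most $\alpha p$ nonzero entries. $\log$ is the natural logarithm. *)

(* Defs.v *)
From HB Require Import structures.
From mathcomp Require Import all_boot all_order all_algebra.
From mathcomp Require Import reals exp.
Set Implicit Arguments. Unset Strict Implicit. Unset Printing Implicit Defensive.
Import Order.TTheory GRing.Theory Num.Theory.
Local Open Scope ring_scope.

Definition sparse (R : numDomainType) (p q : nat) (A : 'M[R]_(p, q)) (alpha : R) : bool :=
  [forall i : 'I_p, #|[set j : 'I_q | A i j != 0]|%:R <= alpha * q%:R]
  && [forall j : 'I_q, #|[set i : 'I_p | A i j != 0]|%:R <= alpha * p%:R].

(* Sampling k row indices uniformly WITH replacement = uniform choice of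
   f : 'I_k -> 'I_m; the sampled submatrix is rowsub f S. *)
Definition prob_rows_wr (R : numFieldType) (m n k : nat) (S : 'M[R]_(m, n))
  (P : 'M[R]_(k, n) -> bool) : R :=
  #|[set f : {ffun 'I_k -> 'I_m} | P (rowsub f S)]|%:R
  / #|[set: {ffun 'I_k -> 'I_m}]|%:R.

Definition prob_cols_wr (R : numFieldType) (m n k : nat) (S : 'M[R]_(m, n))
  (P : 'M[R]_(m, k) -> bool) : R :=
  #|[set f : {ffun 'I_k -> 'I_n} | P (colsub f S)]|%:R
  / #|[set: {ffun 'I_k -> 'I_n}]|%:R.

(* Sampling k indices uniformly WITHOUT replacement = uniform choice of an
   injective f : 'I_k -> 'I_m (ordered sample of distinct indices). *)
Definition prob_rows_wor (R : numFieldType) (m n k : nat) (S : 'M[R]_(m, n))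
  (P : 'M[R]_(k, n) -> bool) : R :=
  #|[set f : {ffun 'I_k -> 'I_m} | injectiveb f && P (rowsub f S)]|%:R
  / #|[set f : {ffun 'I_k -> 'I_m} | injectiveb f]|%:R.

Definition prob_cols_wor (R : numFieldType) (m n k : nat) (S : 'M[R]_(m, n))
  (P : 'M[R]_(m, k) -> bool) : R :=
  #|[set f : {ffun 'I_k -> 'I_n} | injectiveb f && P (colsub f S)]|%:R
  / #|[set f : {ffun 'I_k -> 'I_n} | injectiveb f]|%:R.

(* Main.v *)
Require Import Defs.
From HB Require Import structures.
From mathcomp Require Import all_boot all_order all_algebra all_fingroup.
From mathcomp Require Import reals exp sequences.
From mathcomp Require Import ring lra zify.
Import Order.TTheory GRing.Theory Num.Theory.
Definition Nc {k m : nat} (F : {set {ffun 'I_k -> 'I_m}}) (D : {set 'I_m}) (J : {set 'I_k}) :=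
  #|[set f in F | [forall i in J, f i \in D]]|.

Lemma card_pairs (T1 T2 : finType) (P : {set T1 * T2}) :
  #|P| = \sum_(x : T1) #|[set y | (x, y) \in P]|.
Proof.
rewrite -sum1_card (eq_bigl (fun p => p \in P)) //.
rewrite big_mkcond /=.
transitivity (\sum_(x : T1) \sum_(y : T2) (if (x,y) \in P then 1 else 0)).
  by rewrite pair_bigA /=; apply: eq_bigr => -[x y].
apply: eq_bigr => x _; rewrite -sum1_card [RHS]big_mkcond /=.
by apply: eq_bigr => y _; rewrite inE.
Qed.

Lemma step_all k m (D : {set 'I_m}) (J : {set 'I_k}) i0 : i0 \notin J ->
  Nc [set: {ffun 'I_k -> 'I_m}] D (i0 |: J) * m <= Nc [set: {ffun 'I_k -> 'I_m}] D J * #|D|.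
Proof.
move=> i0J.
rewrite /Nc.
set A := [set f : {ffun 'I_k -> 'I_m} in setT | [forall i in J, f i \in D]].
set B := [set f : {ffun 'I_k -> 'I_m} in setT | [forall i in i0 |: J, f i \in D]].
pose upd (f : {ffun 'I_k -> 'I_m}) y := [ffun i => if i == i0 then y else f i].
pose Phi (p : {ffun 'I_k -> 'I_m} * 'I_m) := (upd p.1 p.2, p.1 i0).
have PhiK : involutive Phi.
  case=> f y; rewrite /Phi /upd /=; congr pair; last by rewrite ffunE eqxx.
  by apply/ffunP => i; rewrite !ffunE; case: eqP => // ->.
have -> : #|B| * m = #|setX B [set: 'I_m]| by rewrite cardsX cardsT card_ord.
have -> : #|A| * #|D| = #|setX A D| by rewrite cardsX.
rewrite -(card_imset _ (inv_inj PhiK)); apply: subset_leq_card.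
apply/subsetP => _ /imsetP [[f y] + ->]; rewrite !inE /= => /andP [fB _].
move: fB => /forallP fB.
have := fB i0; rewrite setU11 /= => fi0; rewrite fi0 andbT.
apply/forallP => i; apply/implyP => iJ; rewrite ffunE.
case: eqP => [ei|_]; first by rewrite -ei iJ in i0J.
by have := fB i; rewrite inE iJ orbT.
Qed.

Lemma step_inj k m (D : {set 'I_m}) (J : {set 'I_k}) i0 : i0 \notin J ->
  Nc [set f : {ffun 'I_k -> 'I_m} | injectiveb f] D (i0 |: J) * m
  <= Nc [set f : {ffun 'I_k -> 'I_m} | injectiveb f] D J * #|D|.
Proof.
move=> i0J; rewrite /Nc.
set Fi := [set f : {ffun 'I_k -> 'I_m} | injectiveb f].
set A := [set f in Fi | [forall i in J, f i \in D]].
set B := [set f in Fi | [forall i in i0 |: J, f i \in D]].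
have BA : B \subset A.
  apply/subsetP => f; rewrite !inE => /andP [-> /forallP H] /=.
  by apply/forallP => i; apply/implyP => iJ; have := H i; rewrite inE iJ orbT.
have [A0|[g gA]] := set_0Vmem A.
  by have := subset_leq_card BA; rewrite A0 cards0 leqn0 => /eqP ->.
have jD : #|J| <= #|D|.
  move: gA; rewrite !inE => /andP [/injectiveP ginj /forallP gJ].
  rewrite -(card_imset _ ginj); apply: subset_leq_card; apply/subsetP => y /imsetP [i iJ ->].
  by have := gJ i; rewrite iJ.
pose Phi (p : {ffun 'I_k -> 'I_m} * 'I_m) :=
  ([ffun i => tperm (p.1 i0) p.2 (p.1 i)], p.1 i0).
have PhiK : involutive Phi.
  case=> f y; rewrite /Phi /=; congr pair; last by rewrite ffunE tpermL.
  by apply/ffunP => i; rewrite !ffunE tpermL tpermC tpermK.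
pose P2 := [set p : {ffun 'I_k -> 'I_m} * 'I_m | (p.1 \in B) && (p.2 \notin p.1 @: J)].
pose P1 := [set p : {ffun 'I_k -> 'I_m} * 'I_m | (p.1 \in A) && (p.2 \in D :\: p.1 @: J)].
have cJ (f : {ffun 'I_k -> 'I_m}) : f \in Fi -> #|f @: J| = #|J|.
  by rewrite inE => /injectiveP finj; rewrite card_imset.
have c2 : #|P2| = #|B| * (m - #|J|).
  rewrite card_pairs -sum_nat_const [RHS]big_mkcond /=; apply: eq_bigr => f _.
  case: ifP => fB.
    have fF : f \in Fi by move: fB; rewrite inE => /andP [].
    have -> : [set y | (f, y) \in P2] = ~: (f @: J).
      by apply/setP => y; rewrite in_set /P2 in_set /= fB /= inE.
    by rewrite cardsCs setCK card_ord cJ.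
  apply/eqP; rewrite cards_eq0; apply/eqP/setP => y; rewrite in_set0 in_set /P2 in_set /= fB //.
have c1 : #|P1| = #|A| * (#|D| - #|J|).
  rewrite card_pairs -sum_nat_const [RHS]big_mkcond /=; apply: eq_bigr => f _.
  case: ifP => fA.
    have fF : f \in Fi by move: fA; rewrite inE => /andP [].
    have -> : [set y | (f, y) \in P1] = D :\: f @: J.
      by apply/setP => y; rewrite in_set /P1 in_set /= fA.
    have sub : f @: J \subset D.
      move: fA; rewrite inE => /andP [_ /forallP fJ].
      by apply/subsetP => _ /imsetP [i iJ ->]; have := fJ i; rewrite iJ.
    by rewrite cardsD (setIidPr sub) cJ.
  apply/eqP; rewrite cards_eq0; apply/eqP/setP => y; rewrite in_set0 in_set /P1 in_set /= fA //.
have le21 : #|P2| <= #|P1|.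
  rewrite -(card_imset _ (inv_inj PhiK)); apply: subset_leq_card.
  apply/subsetP => _ /imsetP [[f y] + ->]; rewrite !inE /= => /andP [+ yJ].
  move=> /andP [/injectiveP finj /forallP fB].
  have fi0 : f i0 \in D by have := fB i0; rewrite setU11.
  have fix_i i : i \in J -> tperm (f i0) y (f i) = f i.
    move=> iJ; apply: tpermD.
      by apply/eqP => /finj ei; rewrite ei iJ in i0J.
    by apply/eqP => ey; rewrite ey (imset_f _ iJ) in yJ.
  have img : [ffun i => tperm (f i0) y (f i)] @: J = f @: J.
    by apply: eq_in_imset => i iJ; rewrite ffunE fix_i.
  rewrite img fi0 /= andbT; apply/andP; split; last first.
    by apply/imsetP => -[i iJ /finj ei]; rewrite ei iJ in i0J.
  apply/andP; split.
    apply/injectiveP => i1 i2; rewrite !ffunE => /perm_inj; exact: finj.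
  apply/forallP => i; apply/implyP => iJ; rewrite ffunE fix_i //.
  by have := fB i; rewrite inE iJ orbT.
have le : #|B| * (m - #|J|) <= #|A| * (#|D| - #|J|) by rewrite -c1 -c2.
have BAc := subset_leq_card BA.
have H : #|B| * #|J| <= #|A| * #|J| by rewrite leq_mul2r BAc orbT.
apply: (leq_trans (_ : _ <= #|B| * (m - #|J|) + #|B| * #|J|)).
  by rewrite -mulnDr; apply: leq_mul => //; lia.
by rewrite (leq_trans (leq_add le H)) // -mulnDr subnK.
Qed.

Lemma card_cover (T I : finType) (A : {set T}) (Bs : I -> {set T}) :
  (forall f, f \in A -> exists j, f \in Bs j) -> (#|A| <= \sum_j #|Bs j|)%N.
Proof.
move=> H; apply: (@leq_trans #|\bigcup_j Bs j|).
  apply: subset_leq_card; apply/subsetP => f /H [j fj]; apply/bigcupP; by exists j.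
apply: (big_ind2 (fun (U : {set T}) (s : nat) => is_true (#|U| <= s)%N)).
- by rewrite cards0.
- move=> U1 s1 U2 s2 h1 h2; rewrite cardsU; apply: leq_trans (leq_subr _ _) _.
  exact: leq_add.
- by [].
Qed.

Local Open Scope ring_scope.

Lemma Nc_bound (R : realFieldType) k m (F : {set {ffun 'I_k -> 'I_m}}) (D : {set 'I_m}) :
  (0 < m)%N ->
  (forall (J : {set 'I_k}) (i0 : 'I_k), i0 \notin J -> (Nc F D (i0 |: J) * m <= Nc F D J * #|D|)%N) ->
  forall J, (Nc F D J)%:R <= #|F|%:R * (#|D|%:R / m%:R) ^+ #|J| :> R.
Proof.
move=> m0 step J; move: {2}#|J| (erefl #|J|) => n; elim: n J => [|n IH] J cJ.
  move/eqP: cJ; rewrite cards_eq0 => /eqP ->; rewrite cards0 expr0 mulr1 /Nc.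
  rewrite ler_nat; apply: subset_leq_card; apply/subsetP => f.
  by rewrite inE => /andP [].
have : (0 < #|J|)%N by rewrite cJ.
rewrite card_gt0 => /set0Pn [i0 i0J].
have eJ : J = i0 |: (J :\ i0) by rewrite setD1K.
have cJ' : #|J :\ i0| = n by move: cJ; rewrite (cardsD1 i0 J) i0J add1n => -[].
have i0J' : i0 \notin J :\ i0 by rewrite !inE eqxx.
have := step _ _ i0J'; rewrite -eJ => st.
have m0R : 0 < m%:R :> R by rewrite ltr0n.
have p0 : 0 <= #|D|%:R / m%:R :> R by rewrite divr_ge0.
rewrite cJ exprS.
set p := (#|D|%:R / m%:R).
have h1 : (Nc F D J)%:R <= (Nc F D (J :\ i0))%:R * p :> R.
  by rewrite /p mulrA ler_pdivlMr // -!natrM ler_nat.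
apply: le_trans h1 _.
rewrite [X in _ <= X]mulrCA [X in X <= _]mulrC; apply: ler_wpM2l => //.
by rewrite -cJ'; apply: IH.
Qed.

Lemma prod_ind (R : comNzRingType) (I : finType) (J : {set I}) (b : I -> bool) :
  \prod_(i in J) (b i)%:R = ([forall i in J, b i])%:R :> R.
Proof.
case: (boolP [forall i in J, b i]) => [/forallP H|].
  by rewrite big1 // => i iJ; have := H i; rewrite iJ /= => ->.
rewrite negb_forall => /existsP [i]; rewrite negb_imply => /andP [iJ nb].
by rewrite (bigD1 i iJ) /= (negbTE nb) mul0r.
Qed.

Lemma mgf (R : realFieldType) k m (F : {set {ffun 'I_k -> 'I_m}}) (D : {set 'I_m}) (p : R) :
  0 <= p ->
  (forall J, (Nc F D J)%:R <= #|F|%:R * p ^+ #|J|) ->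
  \sum_(f in F) (2 : R) ^+ #|[set i | f i \in D]| <= #|F|%:R * (1 + p) ^+ k.
Proof.
move=> p0 H.
have e (f : {ffun 'I_k -> 'I_m}) : (2 : R) ^+ #|[set i | f i \in D]|
    = \sum_(J : {set 'I_k}) ([forall i in J, f i \in D])%:R.
  rewrite -prodr_const big_mkcond /=.
  transitivity (\prod_(i : 'I_k) ((f i \in D)%:R + 1 : R)).
    by apply: eq_bigr => i _; rewrite inE; case: ifPn => h; rewrite ?h ?(negbTE h) /=; lra.
  rewrite bigA_distr.
  apply: eq_bigr => J _; rewrite -prod_ind [RHS]big_mkcond /=.
  by apply: eq_bigr => i _; case: (i \in J).
under eq_bigr => f _ do rewrite e.
rewrite exchange_big /=.
apply: (@le_trans _ _ (\sum_(J : {set 'I_k}) #|F|%:R * p ^+ #|J|)).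
  apply: ler_sum => J _; apply: le_trans (H J); rewrite /Nc.
  rewrite -sum1_card natr_sum [X in _ <= X]big_mkcond /=.
  rewrite big_mkcond /=; apply: ler_sum => f _; rewrite inE.
  by case: (f \in F); case: [forall _ in _, _].
rewrite -mulr_sumr; apply: ler_wpM2l => //.
have -> : (1 + p) ^+ k = \prod_(i : 'I_k) (p + 1).
  by rewrite prodr_const card_ord addrC.
rewrite bigA_distr; apply: ler_sum => J _.
by rewrite -prodr_const [X in X <= _]big_mkcond /=.
Qed.
Lemma sq_step {R : realFieldType} {x d e : R} : 0 <= d -> d <= x -> e <= d ^+ 2 -> e <= x ^+ 2.
Proof.
move=> d0 dx ed; apply: (le_trans ed).
by rewrite ler_pXn2r // ?nnegrE //; apply: le_trans dx.
Qed.

Lemma ln2_ge (R : realType) : 11 / 16 <= ln (2 : R).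
Proof.
set y := expR (- (11 / 1024)) : R.
have hy : 1013 / 1024 <= y.
  by apply: le_trans (expR_ge1Dx _); lra.
have h1 : (1002*1024+121)/(1024*1024) <= y ^+ 2.
  by apply: (sq_step _ hy) => //; lra.
have h2 : (980*1024+720)/(1024*1024) <= (y ^+ 2) ^+ 2.
  by apply: (sq_step _ h1) => //; lra.
have h3 : (939*1024+242)/(1024*1024) <= ((y ^+ 2) ^+ 2) ^+ 2.
  by apply: (sq_step _ h2) => //; lra.
have h4 : (861*1024+500)/(1024*1024) <= (((y ^+ 2) ^+ 2) ^+ 2) ^+ 2.
  by apply: (sq_step _ h3) => //; lra.
have h5 : (724*1024+786)/(1024*1024) <= ((((y ^+ 2) ^+ 2) ^+ 2) ^+ 2) ^+ 2.
  by apply: (sq_step _ h4) => //; lra.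
have h6 : 1 / 2 <= (((((y ^+ 2) ^+ 2) ^+ 2) ^+ 2) ^+ 2) ^+ 2.
  by apply: (sq_step _ h5) => //; lra.
rewrite -!exprM /= in h6.
have e6 : y ^+ 64 = expR (- (11 / 16)).
  by rewrite /y -expRM_natl; congr expR; rewrite mulrN; congr (- _); lra.
rewrite e6 expRN in h6.
have : expR (11 / 16) <= (2 : R).
  have p : 0 < expR (11/16 : R) := expR_gt0 _.
  rewrite -(invrK (expR _)) -[leRHS]invrK lef_pV2 ?posrE ?invr_gt0 //; lra.
move=> h; rewrite -(expRK (11/16 : R)) ler_ln ?posrE ?expR_gt0 //.
Qed.

Lemma chernoff (R : realType) k m (F : {set {ffun 'I_k -> 'I_m}}) (D : {set 'I_m})
  (a : R) (nn : nat) :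
  (0 < m)%N -> (0 < nn)%N -> 0 <= a -> #|D|%:R <= a * m%:R ->
  (forall (J : {set 'I_k}) (i0 : 'I_k), i0 \notin J -> (Nc F D (i0 |: J) * m <= Nc F D J * #|D|)%N) ->
  (0 < a -> 16 / 3 * ln nn%:R <= a * k%:R) ->
  #|[set f in F | 2 * a * k%:R < #|[set i | f i \in D]|%:R]|%:R * nn%:R ^+ 2 <= #|F|%:R :> R.
Proof.
move=> m0 nn0 a0 Da step hk.
set Bd := [set f in F | _].
have m0R : 0 < m%:R :> R by rewrite ltr0n.
have [a00|apos] := eqVneq a 0.
  have -> : Bd = set0.
    apply/setP => f; rewrite !inE a00 !mulr0 mul0r.
    have : #|D|%:R <= (0%N)%:R :> R by rewrite mulr0n; move: Da; rewrite a00 mul0r.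
    rewrite ler_nat leqn0 cards_eq0 => /eqP ->.
    have -> : [set i | f i \in set0] = set0 by apply/setP => i; rewrite !inE.
    by rewrite cards0 ltxx andbF.
  by rewrite cards0 mul0r.
have a1 : 0 < a by rewrite lt0r apos.
have hk' := hk a1.
set p := #|D|%:R / m%:R : R.
have p0 : 0 <= p by rewrite divr_ge0.
have pa : p <= a by rewrite ler_pdivrMr.
have M := @mgf R k m F D p p0 (@Nc_bound R k m F D m0 step).
have l2 := ln2_ge R.
have l2p : 0 < ln (2 : R) by apply: ln_gt0; lra.
set X := fun f : {ffun 'I_k -> 'I_m} => #|[set i | f i \in D]|.
have low : #|Bd|%:R * expR (2 * a * k%:R * ln 2)
           <= \sum_(f in Bd) (2 : R) ^+ X f.
  rewrite mulr_natl -sumr_const; apply: ler_sum => f.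
  rewrite inE => /andP [_ hf].
  rewrite -[X in _ <= X ^+ _](@lnK _ 2) ?posrE // -expRM_natl ler_expR.
  by apply: ler_wpM2r; [exact: ltW | exact: ltW].
have sub : \sum_(f in Bd) (2 : R) ^+ X f <= \sum_(f in F) (2 : R) ^+ X f.
  rewrite [X in _ <= X](bigID (fun f => f \in Bd)) /= -[X in X <= _]addr0.
  apply: lerD; last by apply: sumr_ge0 => f _; rewrite exprn_ge0.
  rewrite le_eqVlt; apply/orP; left; apply/eqP; apply: eq_bigl => f.
  by case fB: (f \in Bd); rewrite ?andbT ?andbF //; move: fB; rewrite inE => /andP [].
have up : (1 + p) ^+ k <= expR (a * k%:R).
  apply: (@le_trans _ _ (expR p ^+ k)).
    by apply: lerXn2r; rewrite ?nnegrE ?expR_ge0 //; [lra | exact: expR_ge1Dx].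
  by rewrite -expRM_natl ler_expR mulrC ler_wpM2r.
have key : #|Bd|%:R * expR (2 * a * k%:R * ln 2) <= #|F|%:R * expR (a * k%:R).
  apply: le_trans (le_trans low (le_trans sub M)) _; apply: ler_wpM2l => //.
have lnn0 : 0 <= ln (nn%:R : R) by apply: ln_ge0; rewrite ler1n.
have ex : 2 * ln nn%:R <= 2 * a * k%:R * ln 2 - a * k%:R :> R.
  have hh : 0 <= a * k%:R * (ln 2 - 11 / 16) :> R.
    by apply: mulr_ge0; [apply: mulr_ge0 => //; exact: ltW | lra].
  nra.
have nn2 : nn%:R ^+ 2 = expR (2 * ln nn%:R) :> R.
  by rewrite -[2 in RHS]/(2%:R) expRM_natl lnK // posrE ltr0n.
rewrite nn2.
apply: (@le_trans _ _ (#|Bd|%:R * expR (2 * a * k%:R * ln 2 - a * k%:R))).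
  by apply: ler_wpM2l => //; rewrite ler_expR.
rewrite expRB mulrA ler_pdivrMr ?expR_gt0 //.
Qed.

Lemma rows_bad (R : realType) m n k (S : 'M[R]_(m, n)) (a : R)
  (F : {set {ffun 'I_k -> 'I_m}}) :
  (0 < m)%N -> (0 < n)%N -> sparse S a ->
  (forall (D : {set 'I_m}) (J : {set 'I_k}) (i0 : 'I_k), i0 \notin J ->
     (Nc F D (i0 |: J) * m <= Nc F D J * #|D|)%N) ->
  (0 < a -> 16 / 3 * ln n%:R <= a * k%:R) ->
  #|[set f in F | ~~ sparse (rowsub f S) (2 * a)]|%:R * n%:R <= #|F|%:R :> R.
Proof.
move=> m0 n0 /andP [/forallP Srow /forallP Scol] step hk.
have n0R : 0 < n%:R :> R by rewrite ltr0n.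
have a0 : 0 <= a.
  have := Srow (Ordinal m0); rewrite -(pmulr_lge0 _ n0R); apply: le_trans.
  exact: ler0n.
pose Dj (j : 'I_n) := [set i | S i j != 0].
pose Bj (j : 'I_n) := [set f in F | 2 * a * k%:R < #|[set i | f i \in Dj j]|%:R].
set Bad := [set f in F | _].
have cover : (#|Bad| <= \sum_j #|Bj j|)%N.
  apply: card_cover => f; rewrite inE => /andP [fF]; rewrite /sparse negb_and.
  case/orP; rewrite negb_forall => /existsP [x].
    have -> : [set j | rowsub f S x j != 0] = [set j | S (f x) j != 0].
      by apply/setP => j; rewrite !inE mxE.
    move/negP; case; apply: le_trans (Srow (f x)) _.
    by apply: ler_wpM2r; rewrite ?ler0n //; lra.
  move=> hx; exists x; rewrite inE fF /= ltNge.
  have -> : [set i | f i \in Dj x] = [set i | rowsub f S i x != 0].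
    by apply/setP => i; rewrite !inE mxE.
  exact: hx.
have hB j : #|Bj j|%:R * n%:R ^+ 2 <= #|F|%:R :> R.
  exact: (@chernoff R k m F (Dj j) a n m0 n0 a0 (Scol j) (step (Dj j)) hk).
have c1 : #|Bad|%:R * n%:R ^+ 2 <= \sum_j #|Bj j|%:R * n%:R ^+ 2 :> R.
  rewrite -mulr_suml; apply: ler_wpM2r; first exact: exprn_ge0 (ltW n0R).
  by rewrite -natr_sum ler_nat.
have c2 : \sum_(j : 'I_n) #|Bj j|%:R * n%:R ^+ 2 <= n%:R * #|F|%:R :> R.
  have -> : n%:R * #|F|%:R = #|F|%:R *+ #|'I_n| :> R by rewrite card_ord mulr_natl.
  rewrite -sumr_const.
  by apply: ler_sum => j _; apply: hB.
have := le_trans c1 c2; rewrite expr2 mulrA [_ * #|F|%:R]mulrC ler_pM2r //.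
Qed.

Lemma prob_from_bad (R : realFieldType) (T : finType) (F : {set T}) (P : pred T) n :
  (0 < #|F|)%N -> (0 < n)%N ->
  #|[set f in F | ~~ P f]|%:R * n%:R <= #|F|%:R :> R ->
  1 - n%:R^-1 <= #|[set f in F | P f]|%:R / #|F|%:R :> R.
Proof.
move=> F0 n0 hb.
have e : #|[set f in F | P f]| + #|[set f in F | ~~ P f]| = #|F|.
  by rewrite -(cardsID [set f | P f] F); congr (_ + _); apply: eq_card => f;
  rewrite !inE andbC.
have F0R : 0 < #|F|%:R :> R by rewrite ltr0n.
have n0R : 0 < n%:R :> R by rewrite ltr0n.
move: hb e; set b := #|[set f in F | ~~ P f]|; set g := #|[set f in F | P f]|.
move=> hb e.
have h : b%:R <= #|F|%:R / n%:R :> R by rewrite ler_pdivlMr.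
rewrite -e natrD in h; rewrite ler_pdivlMr // -e natrD.
rewrite mulrBl mul1r [_^-1 * _]mulrC; lra.
Qed.

Lemma alpha_k (R : realType) (alpha c : R) (r k n : nat) (K : R) :
  (0 < r)%N -> (1 <= n)%N -> 0 < alpha -> K <= c * (alpha * r%:R) -> 16 / 3 <= K ->
  k%:R = c * r%:R * ln n%:R -> 16 / 3 * ln n%:R <= alpha * k%:R.
Proof.
move=> r0 n1 a0 hK h16 hk.
have l0 : 0 <= ln (n%:R : R) by apply: ln_ge0; rewrite ler1n.
have -> : alpha * k%:R = (c * (alpha * r%:R)) * ln n%:R by rewrite hk; ring.
by apply: ler_wpM2r => //; apply: le_trans h16 hK.
Qed.

Lemma rows_main (R : realType) m n (S : 'M[R]_(m, n)) (alpha : R) (r : nat) :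
  (0 < m)%N -> (0 < n)%N -> (0 < r)%N -> sparse S alpha ->
  (forall (c : R) (k : nat), 16 / (3 * alpha * r%:R) <= c ->
      k%:R = c * r%:R * ln n%:R ->
      1 - n%:R^-1 <= prob_rows_wr S (fun A : 'M[R]_(k, n) => sparse A (2 * alpha)))
  /\
  (forall (c : R) (k : nat), 8 / (alpha * r%:R) <= c ->
      k%:R = c * r%:R * ln n%:R -> (k <= m)%N ->
      1 - 2 * n%:R^-1 <= prob_rows_wor S (fun A : 'M[R]_(k, n) => sparse A (2 * alpha))).
Proof.
move=> m0 n0 r0 sp.
have r0R : 0 < r%:R :> R by rewrite ltr0n.
split => c k hc hk.
  rewrite /prob_rows_wr.
  have -> : [set f : {ffun 'I_k -> 'I_m} | sparse (rowsub f S) (2 * alpha)]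
      = [set f in [set: {ffun 'I_k -> 'I_m}] | sparse (rowsub f S) (2 * alpha)].
    by apply/setP => f; rewrite !inE.
  apply: (@prob_from_bad R _ [set: {ffun 'I_k -> 'I_m}] (fun f => sparse (rowsub f S) (2 * alpha)) n) => //.
    by apply/card_gt0P; exists [ffun _ => Ordinal m0]; rewrite inE.
  apply: rows_bad => //.
    by move=> D J i0 hi; exact: step_all.
  move=> apos; apply: (@alpha_k R alpha c r k n (16/3)) => //.
  have -> : 16 / 3 = 16 / (3 * alpha * r%:R) * (alpha * r%:R) :> R.
    by field; apply/andP; split; rewrite gt_eqF.
  by apply: ler_wpM2r => //; apply: mulr_ge0; apply: ltW.
move=> km.
rewrite /prob_rows_wor.
set Fi := [set f : {ffun 'I_k -> 'I_m} | injectiveb f].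
have -> : [set f : {ffun 'I_k -> 'I_m} | injectiveb f && sparse (rowsub f S) (2 * alpha)]
    = [set f in Fi | sparse (rowsub f S) (2 * alpha)].
  by apply/setP => f; rewrite !inE.
have n0R : 0 < n%:R :> R by rewrite ltr0n.
have ni : 0 <= n%:R^-1 :> R by rewrite invr_ge0 ltW.
suff H : 1 - n%:R^-1 <= #|[set f in Fi | sparse (rowsub f S) (2 * alpha)]|%:R / #|Fi|%:R :> R.
  by apply: le_trans _ H; lra.
apply: (@prob_from_bad R _ Fi (fun f => sparse (rowsub f S) (2 * alpha)) n) => //.
  apply/card_gt0P; exists [ffun i => widen_ord km i]; rewrite inE.
  apply/injectiveP => i j; rewrite !ffunE => /(congr1 val) /= /val_inj //.
apply: rows_bad => //.
  by move=> D J i0 hi; exact: step_inj.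
move=> apos; apply: (@alpha_k R alpha c r k n 8) => //; last lra.
have -> : 8 = 8 / (alpha * r%:R) * (alpha * r%:R) :> R.
  by field; apply/andP; split; rewrite gt_eqF.
by apply: ler_wpM2r => //; apply: mulr_ge0; apply: ltW.
Qed.

Lemma sparse_tr (R : numDomainType) p q (A : 'M[R]_(p, q)) (b : R) :
  sparse A^T b = sparse A b.
Proof.
rewrite /sparse andbC; congr (_ && _); apply: eq_forallb => i;
by congr (_%:R <= _); apply: eq_card => j; rewrite !inE mxE.
Qed.

Lemma colsub_tr (R : numDomainType) m n k (S : 'M[R]_(m, n)) (f : {ffun 'I_k -> 'I_n}) :
  colsub f S = (rowsub f S^T)^T.
Proof. by apply/matrixP => i j; rewrite !mxE. Qed.

Lemma cols_wr_tr (R : numFieldType) m n k (S : 'M[R]_(m, n)) (b : R) :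
  prob_cols_wr S (fun A : 'M[R]_(m, k) => sparse A b)
  = prob_rows_wr S^T (fun A : 'M[R]_(k, m) => sparse A b).
Proof.
rewrite /prob_cols_wr /prob_rows_wr; congr (_%:R / _); apply: eq_card => f.
by rewrite !inE colsub_tr sparse_tr.
Qed.

Lemma cols_wor_tr (R : numFieldType) m n k (S : 'M[R]_(m, n)) (b : R) :
  prob_cols_wor S (fun A : 'M[R]_(m, k) => sparse A b)
  = prob_rows_wor S^T (fun A : 'M[R]_(k, m) => sparse A b).
Proof.
rewrite /prob_cols_wor /prob_rows_wor; congr (_%:R / _); apply: eq_card => f.
by rewrite !inE colsub_tr sparse_tr.
Qed.

Theorem proposition4p5 (R : realType) (m n : nat) (S : 'M[R]_(m, n))
  (alpha : R) (r : nat) :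
  (0 < m)%N -> (0 < n)%N -> (0 < r)%N -> sparse S alpha ->
  (* 1. with replacement *)
  ((forall (c : R) (k : nat), 16 / (3 * alpha * r%:R) <= c ->
      k%:R = c * r%:R * ln n%:R ->
      1 - n%:R^-1 <= prob_rows_wr S (fun A : 'M[R]_(k, n) => sparse A (2 * alpha)))
   /\
   (forall (c : R) (k : nat), 16 / (3 * alpha * r%:R) <= c ->
      k%:R = c * r%:R * ln m%:R ->
      1 - m%:R^-1 <= prob_cols_wr S (fun A : 'M[R]_(m, k) => sparse A (2 * alpha))))
  /\
  (* 2. without replacement *)
  ((forall (c : R) (k : nat), 8 / (alpha * r%:R) <= c ->
      k%:R = c * r%:R * ln n%:R -> (k <= m)%N ->
      1 - 2 * n%:R^-1 <= prob_rows_wor S (fun A : 'M[R]_(k, n) => sparse A (2 * alpha)))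
   /\
   (forall (c : R) (k : nat), 8 / (alpha * r%:R) <= c ->
      k%:R = c * r%:R * ln m%:R -> (k <= n)%N ->
      1 - 2 * m%:R^-1 <= prob_cols_wor S (fun A : 'M[R]_(m, k) => sparse A (2 * alpha)))).
Proof.
move=> m0 n0 r0 sp.
have spT : sparse S^T alpha by rewrite sparse_tr.
have [A1 A2] := @rows_main R m n S alpha r m0 n0 r0 sp.
have [B1 B2] := @rows_main R n m S^T alpha r n0 m0 r0 spT.
split; split => //.
- by move=> c k hc hk; rewrite cols_wr_tr; apply: B1 hc hk.
- by move=> c k hc hk hkn; rewrite cols_wor_tr; apply: B2 hc hk hkn.
Qed.
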